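(* Let $R$ be a (unital, not necessarily associative) ring, let $\sigma\colon R\to R$ be an additive surjection with $\sigma(1)=1$, and let $\delta\colon R\to R$ be an additive map with $\delta(1)=0$. If $R$ is right Noetherian, then the non-associative Ore extension $R[X;\sigma,\delta]$ is right Noetherian.
   Context: A right ideal of a non-associative ring $S$ is an additive subgroup $I$ with $Is\subseteq I$ for all $s\in S$; $S$ is right Noetherian if it satisfies the ascending chain condition on right ideals. For a non-associative ring $R$ and additive maps $\sigma,\delta\colon R\to R$ with $\sigma(1)=1$, $\delta(1)=0$, the non-associative Ore extension $R[X;\sigma,\delta]$ is the additive group of formal sums $\sum_{i\in\mathbb{N}} r_iX^i$ ($r_i\in R$, finitely many non-zero) with pointwise addition and multiplication the biadditive extension of $(rX^m)(sX^n)=\sum_{i\in\mathbb{N}}(r\pi_i^m(s))X^{i+n}$ for $r,s\in R$, $m,n\in\mathbb{N}$, where $\pi_i^m$ is the sum of all $\binom{m}{i}$ compositions of $i$ copies of $\sigma$ and $m-i$ copies of $\delta$, and $\pi_i^m=0$ if $i>m$. *)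

(* Defs.v *)
From mathcomp Require Import all_boot all_algebra.
Set Implicit Arguments. Unset Strict Implicit. Unset Printing Implicit Defensive.
Import GRing.Theory.
Local Open Scope ring_scope.

Definition is_naring (S : Type) (zero one : S) (add : S -> S -> S) (opp : S -> S)
  (mul : S -> S -> S) : Prop :=
  (forall x y z, add x (add y z) = add (add x y) z) /\
  (forall x y, add x y = add y x) /\
  (forall x, add zero x = x) /\
  (forall x, add (opp x) x = zero) /\
  (forall x y z, mul x (add y z) = add (mul x y) (mul x z)) /\
  (forall x y z, mul (add x y) z = add (mul x z) (mul y z)) /\
  (forall x, mul one x = x) /\
  (forall x, mul x one = x).

Definition right_ideal (S : Type) (zero : S) (add : S -> S -> S) (opp : S -> S)
  (mul : S -> S -> S) (I : S -> Prop) : Prop :=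
  I zero /\
  (forall x y, I x -> I y -> I (add x y)) /\
  (forall x, I x -> I (opp x)) /\
  (forall x s, I x -> I (mul x s)).

Definition right_noetherian (S : Type) (zero : S) (add : S -> S -> S) (opp : S -> S)
  (mul : S -> S -> S) : Prop :=
  forall I : nat -> S -> Prop,
    (forall n, right_ideal zero add opp mul (I n)) ->
    (forall n x, I n x -> I n.+1 x) ->
    exists N, forall n, (N <= n)%N -> forall x, I n x <-> I N x.

Section Ore.
Variable R : zmodType.

Fixpoint trim (s : seq R) : seq R :=
  match s with
  | [::] => [::]
  | x :: s' => let t := trim s' in
               if (t == [::]) && (x == 0) then [::] else x :: t
  end.

Lemma trim_wf (s : seq R) : (trim s == [::]) || (last 0 (trim s) != 0).
Proof.
elim: s => [|x s IH] //=.
case: ifP => [_|]; first by [].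
case E: (trim s) IH => [|y t] IH /=.
  by move=> ->.
by move=> _; case/orP: IH.
Qed.

(* formal sums sum_i r_i X^i, i.e. finitely supported coefficient sequences,
   stored canonically (no trailing zeros) *)
Record opoly := OPoly { ocoefs : seq R;
                        ocoefs_wf : (ocoefs == [::]) || (last 0 ocoefs != 0) }.

Definition mkop (s : seq R) : opoly := @OPoly (trim s) (trim_wf s).

Definition ocoef (p : opoly) (i : nat) : R := nth 0 (ocoefs p) i.

Definition ozero : opoly := mkop [::].

Definition oadd (p q : opoly) : opoly :=
  mkop [seq ocoef p i + ocoef q i | i <- iota 0 (maxn (size (ocoefs p)) (size (ocoefs q)))].

Definition oopp (p : opoly) : opoly := mkop [seq - x | x <- ocoefs p].

Variables (mul : R -> R -> R) (sigma delta : R -> R).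

Definition comp_word (w : seq bool) : R -> R :=
  foldr (fun b f => (if b then sigma else delta) \o f) id w.

(* pi_i^m : sum of all binom(m,i) compositions of i copies of sigma and
   m-i copies of delta (an empty sum, i.e. 0, when i > m) *)
Definition pi_op (m i : nat) (x : R) : R :=
  \sum_(w : m.-tuple bool | count id w == i) comp_word w x.

(* biadditive extension of (r X^m)(s X^n) = sum_i (r pi_i^m(s)) X^(i+n):
   the coefficient of X^k is sum_m sum_(n <= k) p_m pi_(k-n)^m (q_n) *)
Definition omul (p q : opoly) : opoly :=
  mkop [seq \sum_(m < size (ocoefs p)) \sum_(n < k.+1)
              mul (ocoef p m) (pi_op m (k - n) (ocoef q n))
        | k <- iota 0 (size (ocoefs p) + size (ocoefs q))].

End Ore.

(* Main.v *)
Require Import Defs.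
From mathcomp Require Import all_boot all_algebra.
Set Implicit Arguments. Unset Strict Implicit. Unset Printing Implicit Defensive.
Import GRing.Theory.
Local Open Scope ring_scope.

Section Basic.
Variable R : zmodType.

Lemma nth_trim (s : seq R) i : nth 0 (trim s) i = nth 0 s i.
Proof.
elim: s i => [|x s IH] i //=.
case: ifP => [/andP[/eqP E /eqP ->]|_].
  by case: i => [|i] //=; rewrite -IH E nth_nil.
by case: i => [|i] //=.
Qed.

Lemma ocoef_mkop (s : seq R) i : ocoef (mkop s) i = nth 0 s i.
Proof. by rewrite /ocoef /mkop /= nth_trim. Qed.

Lemma wf_size (s t : seq R) : (t == [::]) || (last 0 t != 0) ->
  (forall i, nth 0 s i = nth 0 t i) -> (size t <= size s)%N.
Proof.
move=> wt E; rewrite leqNgt; apply/negP => lt.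
case: t wt E lt => [|y t] //= wt E lt.
move: wt; rewrite (last_nth 0) /=.
have -> : nth 0 (y :: t) (size t) = 0.
  by rewrite -E nth_default.
by rewrite eqxx.
Qed.

Lemma opoly_eq (p q : opoly R) : (forall i, ocoef p i = ocoef q i) -> p = q.
Proof.
case: p q => [s ws] [t wt] /= E0.
have E : forall i, nth 0 s i = nth 0 t i by exact: E0.
have St : s = t.
  apply: (@eq_from_nth _ 0); last by move=> i _; apply: E.
  by apply/eqP; rewrite eqn_leq (wf_size wt E) (@wf_size t s ws) // => i; rewrite E.
subst t; congr OPoly; apply: bool_irrelevance.
Qed.

Lemma ocoef_ozero i : ocoef (ozero R) i = 0.
Proof. by rewrite ocoef_mkop nth_nil. Qed.

Lemma ocoef_oadd (p q : opoly R) i : ocoef (oadd p q) i = ocoef p i + ocoef q i.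
Proof.
rewrite ocoef_mkop.
case: (ltnP i (maxn (size (ocoefs p)) (size (ocoefs q)))) => H.
  by rewrite (nth_map 0%N) ?size_iota // nth_iota.
rewrite nth_default ?size_map ?size_iota //.
rewrite geq_max in H; case/andP: H => H1 H2.
by rewrite /ocoef !nth_default // addr0.
Qed.

Lemma ocoef_oopp (p : opoly R) i : ocoef (oopp p) i = - ocoef p i.
Proof.
rewrite ocoef_mkop.
case: (ltnP i (size (ocoefs p))) => H.
  by rewrite (nth_map 0) //.
by rewrite /ocoef !nth_default ?size_map // oppr0.
Qed.

Lemma ocoef_omul mul sigma delta (p q : opoly R) k :
  ocoef (omul mul sigma delta p q) k =
  if (k < size (ocoefs p) + size (ocoefs q))%N then
   \sum_(m < size (ocoefs p)) \sum_(n < k.+1)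
              mul (ocoef p m) (pi_op sigma delta m (k - n) (ocoef q n))
  else 0.
Proof.
rewrite ocoef_mkop; case: ifP => H.
  by rewrite (nth_map 0%N) ?size_iota // nth_iota.
by rewrite nth_default // size_map size_iota leqNgt H.
Qed.

Lemma zero_ozero (p : opoly R) : (forall i, ocoef p i = 0) -> p = ozero R.
Proof. by move=> H; apply: opoly_eq => i; rewrite H ocoef_ozero. Qed.

Lemma sum_single (N j : nat) (G : nat -> R) :
  (forall i, (i < N)%N -> i != j -> G i = 0) ->
  \sum_(i < N) G i = if (j < N)%N then G j else 0.
Proof.
rewrite -(big_mkord xpredT G).
elim: N => [|N IH] H; first by rewrite big_nil.
rewrite big_nat_recr //= IH; last by move=> i Hi; apply: H; apply: ltnW.
have [Hj|Hj] := ltnP j N.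
  rewrite ltnS (ltnW Hj) (H N) ?addr0 //.
  by rewrite eq_sym neq_ltn Hj.
rewrite add0r ltnS.
case: (ltngtP j N) Hj => // [Hj _|-> _].
  by rewrite H // neq_ltn Hj ?orbT.
by []. Qed.
End Basic.

Section Pi.
Variable R : zmodType.
Variables (sigma delta : R -> R) (one : R).
Hypothesis sigmaD : forall x y, sigma (x + y) = sigma x + sigma y.
Hypothesis deltaD : forall x y, delta (x + y) = delta x + delta y.
Hypothesis sigma1 : sigma one = one.
Hypothesis delta1 : delta one = 0.

Lemma add_idem0 (a : R) : a = a + a -> a = 0.
Proof. by move=> H; have := congr1 (fun t => t - a) H; rewrite addrK subrr. Qed.

Lemma sigma0 : sigma 0 = 0.
Proof. by apply: add_idem0; rewrite -sigmaD addr0. Qed.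
Lemma delta0 : delta 0 = 0.
Proof. by apply: add_idem0; rewrite -deltaD addr0. Qed.

Lemma comp_word0 w : comp_word sigma delta w 0 = 0.
Proof. by elim: w => [|[] w IH] //=; rewrite IH ?sigma0 ?delta0. Qed.

Lemma pi_op0 m i : pi_op sigma delta m i 0 = 0.
Proof. by apply: big1 => w _; rewrite comp_word0. Qed.

Lemma pi_op_gt m i x : (m < i)%N -> pi_op sigma delta m i x = 0.
Proof.
move=> H; apply: big1 => w /eqP E; exfalso.
have := count_size id w; rewrite E size_tuple => H'.
by move: (leq_trans H H'); rewrite ltnn.
Qed.

Lemma count_all_true (s : seq bool) :
  (count id s == size s) = (s == nseq (size s) true).
Proof.
elim: s => [|[] s IH] //=.
rewrite add0n; apply/negbTE; rewrite neq_ltn ltnS count_size //.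
Qed.

Lemma comp_word_true n x : comp_word sigma delta (nseq n true) x = iter n sigma x.
Proof. by elim: n => [|n IH] //=; rewrite IH. Qed.

Lemma pi_op_diag m x : pi_op sigma delta m m x = iter m sigma x.
Proof.
rewrite /pi_op (big_pred1 [tuple of nseq m true]).
  by rewrite comp_word_true.
move=> w /=.
have := count_all_true w; rewrite size_tuple => ->.
by rewrite -val_eqE /=.
Qed.

Lemma comp_word_one w : comp_word sigma delta w one = if all id w then one else 0.
Proof.
elim: w => [|[] w IH] //=; rewrite IH.
  by case: (all id w) => //; rewrite sigma0.
by case: (all id w) => //; rewrite delta0.
Qed.

Lemma iter_sigma_one n : iter n sigma one = one.
Proof. by elim: n => [|n IH] //=; rewrite IH. Qed.

Lemma pi_op_one m i : pi_op sigma delta m i one = if i == m then one else 0.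
Proof.
case: eqP => [->|ne]; first by rewrite pi_op_diag iter_sigma_one.
apply: big1 => w /eqP E; rewrite comp_word_one.
case: ifP => // A; exfalso; apply: ne.
by rewrite -E; move: A; rewrite all_count => /eqP ->; rewrite size_tuple.
Qed.

End Pi.

Section Main.
Variable R : zmodType.
Variables (mul : R -> R -> R) (one : R) (sigma delta : R -> R).
Hypothesis HR : is_naring 0 one +%R -%R mul.
Hypothesis sigmaD : forall x y, sigma (x + y) = sigma x + sigma y.
Hypothesis sigmaS : forall y, exists x, sigma x = y.
Hypothesis sigma1 : sigma one = one.
Hypothesis deltaD : forall x y, delta (x + y) = delta x + delta y.
Hypothesis delta1 : delta one = 0.

Let omul' := omul mul sigma delta.
Definition Cst (r : R) : opoly R := mkop [:: r].
Definition Xp : opoly R := mkop [:: 0; one].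
Definition deg_le (p : opoly R) n := forall j, (n < j)%N -> ocoef p j = 0.

Lemma mulx0 x : mul x 0 = 0.
Proof.
case: HR => _ [_ [_ [_ [HD _]]]].
by apply: add_idem0; rewrite -HD addr0.
Qed.
Lemma mul0x x : mul 0 x = 0.
Proof.
case: HR => _ [_ [_ [_ [_ [HD _]]]]].
by apply: add_idem0; rewrite -HD addr0.
Qed.
Lemma mulx1 x : mul x one = x.
Proof. by case: HR => _ [_ [_ [_ [_ [_ [_ H]]]]]]. Qed.

Lemma coef_mulC p r n k : deg_le p n -> (n <= k)%N ->
  ocoef (omul' p (Cst r)) k = mul (ocoef p k) (iter k sigma r).
Proof.
move=> Hp Hnk; rewrite /omul' ocoef_omul.
have pk0 : (size (ocoefs p) <= k)%N -> ocoef p k = 0.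
  by move=> H; rewrite /ocoef nth_default.
case: ifP => Hk; last first.
  by rewrite pk0 ?mul0x //; move: Hk => /negbT; rewrite -leqNgt => H;
     apply: leq_trans H; apply: leq_addr.
rewrite (eq_bigr (fun m : 'I__ => mul (ocoef p m) (pi_op sigma delta m k r))); last first.
  move=> m _; rewrite (@sum_single _ k.+1 0%N (fun n0 => mul (ocoef p m) (pi_op sigma delta m (k - n0) (ocoef (Cst r) n0)))); first by rewrite subn0 /Cst ocoef_mkop.
  case=> [|i] // _ _.
  by rewrite /Cst ocoef_mkop /= nth_nil pi_op0 ?mulx0.
rewrite (@sum_single _ _ k (fun m => mul (ocoef p m) (pi_op sigma delta m k r))).
  case: ifP => Hks; first by rewrite pi_op_diag.
  by rewrite pk0 ?mul0x // leqNgt Hks.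
move=> m _ ne; case: (ltngtP m k) ne => // H _.
  by rewrite pi_op_gt // mulx0.
by rewrite Hp ?mul0x // (leq_ltn_trans Hnk H).
Qed.

Lemma coef_mulX p k :
  ocoef (omul' p Xp) k = if k is k'.+1 then ocoef p k' else 0.
Proof.
rewrite /omul' ocoef_omul.
have pk0 : forall k, (size (ocoefs p) <= k)%N -> ocoef p k = 0.
  by move=> k0 H; rewrite /ocoef nth_default.
rewrite (eq_bigr (fun m : 'I__ => if (1 < k.+1)%N then
   mul (ocoef p m) (pi_op sigma delta m (k - 1) one) else 0)); last first.
  move=> m _; rewrite (@sum_single _ k.+1 1%N (fun n0 => mul (ocoef p m) (pi_op sigma delta m (k - n0) (ocoef Xp n0)))); first by rewrite /Xp ocoef_mkop.
  case=> [|[|i]] // _ _.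
    by rewrite /Xp ocoef_mkop /= pi_op0 ?mulx0.
  by rewrite /Xp ocoef_mkop /= nth_nil pi_op0 ?mulx0.
case: k => [|k]; first by case: ifP => // _; rewrite big1.
rewrite ltnS /= subn1 /=.
case: ifP => Hk; last first.
  have [E1|Hone] := eqVneq one 0.
    by rewrite -(mulx1 (ocoef p k)) E1 mulx0.
  have sX : size (ocoefs Xp) = 2%N by rewrite /Xp /= (negbTE Hone).
  rewrite pk0 //; move: Hk => /negbT; rewrite -leqNgt sX addn2 ltnS => H.
  by apply: leq_trans H.
rewrite (eq_bigr (fun m : 'I__ => mul (ocoef p m) (if k == m then one else 0))); last first.
  by move=> m _; rewrite pi_op_one.
rewrite (@sum_single _ _ k (fun m => mul (ocoef p m) (if k == m then one else 0))).
  case: ifP => H; first by rewrite eqxx mulx1.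
  by rewrite pk0 // leqNgt H.
by move=> m _ ne; rewrite eq_sym (negbTE ne) mulx0.
Qed.

Lemma iter_surj d s : exists r, iter d sigma r = s.
Proof.
elim: d s => [|d IH] s; first by exists s.
have [t <-] := sigmaS s; have [r <-] := IH t; by exists r.
Qed.

Definition L (J : opoly R -> Prop) d (a : R) :=
  exists f, J f /\ deg_le f d /\ ocoef f d = a.

Lemma L_ideal J d : right_ideal (ozero R) (@oadd R) (@oopp R) omul' J ->
  right_ideal 0 +%R -%R mul (L J d).
Proof.
case=> J0 [JD [JN JM]]; split; [|split; [|split]].
- exists (ozero R); split=> //; split; last by rewrite ocoef_ozero.
  by move=> j _; rewrite ocoef_ozero.
- move=> x y [f [Jf [df <-]]] [g [Jg [dg <-]]].
  exists (oadd f g); split; first exact: JD.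
  split; last by rewrite ocoef_oadd.
  by move=> j H; rewrite ocoef_oadd df ?dg ?addr0.
- move=> x [f [Jf [df <-]]]; exists (oopp f); split; first exact: JN.
  split; last by rewrite ocoef_oopp.
  by move=> j H; rewrite ocoef_oopp df ?oppr0.
- move=> x s [f [Jf [df <-]]].
  have [r Hr] := iter_surj d s.
  exists (omul' f (Cst r)); split; first exact: JM.
  split; last by rewrite (coef_mulC _ df) // Hr.
  move=> j H; rewrite (coef_mulC _ df) ?df ?mul0x //; exact: ltnW.
Qed.

Lemma L_mono_d J d a : right_ideal (ozero R) (@oadd R) (@oopp R) omul' J ->
  L J d a -> L J d.+1 a.
Proof.
case=> _ [_ [_ JM]] [f [Jf [df <-]]].
exists (omul' f Xp); split; first exact: JM.
split; last by rewrite coef_mulX.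
by case=> [|j] // H; rewrite coef_mulX df.
Qed.

Lemma L_mono_d' J d d' a : right_ideal (ozero R) (@oadd R) (@oopp R) omul' J ->
  (d <= d')%N -> L J d a -> L J d' a.
Proof.
move=> HJ /subnK <-; elim: (d' - d)%N => [|e IH] // H.
by rewrite addSn; apply: L_mono_d => //; apply: IH.
Qed.

Lemma L_mono_J (J J' : opoly R -> Prop) d a : (forall f, J f -> J' f) ->
  L J d a -> L J' d a.
Proof. by move=> H [f [Jf Hf]]; exists f; split; [apply: H|]. Qed.

Lemma eq_from_L (J J' : opoly R -> Prop) :
  right_ideal (ozero R) (@oadd R) (@oopp R) omul' J ->
  right_ideal (ozero R) (@oadd R) (@oopp R) omul' J' ->
  (forall f, J f -> J' f) -> (forall d a, L J' d a -> L J d a) ->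
  forall f, J' f -> J f.
Proof.
move=> [J0 [JD [JN _]]] [J'0 [J'D [J'N _]]] sub HL.
suff H : forall d f, J' f -> (forall j, (d <= j)%N -> ocoef f j = 0) -> J f.
  move=> f Jf; apply: (H (size (ocoefs f))) => // j Hj.
  by rewrite /ocoef nth_default.
elim=> [|d IH] f Jf Hf.
  by rewrite (zero_ozero (fun j => Hf j (leq0n j))).
have [g [Jg [dg Eg]]] : L J d (ocoef f d).
  by apply: HL; exists f; split=> //; split.
have Jh : J (oadd f (oopp g)).
  apply: IH; first by apply: J'D => //; apply: J'N; apply: sub.
  move=> j Hj; rewrite ocoef_oadd ocoef_oopp.
  case: (ltngtP d j) Hj => // [H|<-] _.
    by rewrite Hf // dg // oppr0 addr0.
  by rewrite Eg subrr.
have -> : f = oadd (oadd f (oopp g)) g.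
  by apply: opoly_eq => i; rewrite !ocoef_oadd ocoef_oopp subrK.
by apply: JD.
Qed.

Theorem main_thm : right_noetherian 0 +%R -%R mul ->
  right_noetherian (ozero R) (@oadd R) (@oopp R) omul'.
Proof.
move=> HN I HI Hmono.
have chain : forall a b, (a <= b)%N -> forall f, I a f -> I b f.
  move=> a b /subnK <- f; elim: (b - a)%N => [|e IH] // H.
  by rewrite addSn; apply: Hmono; apply: IH.
have [N0 HN0] := HN (fun k => L (I k) k) (fun k => L_ideal k (HI k))
  (fun k a H => L_mono_J (Hmono k) (L_mono_d (HI k) H)).
have HM : forall K, exists M, forall n, (n <= K)%N -> forall k, (M <= k)%N ->
    forall a, L (I k) n a -> L (I M) n a.
  elim=> [|K [M HM]].
    have [M0 H0] := HN (fun k => L (I k) 0) (fun k => L_ideal 0 (HI k))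
      (fun k a H => L_mono_J (Hmono k) H).
    exists M0 => n; rewrite leqn0 => /eqP -> k Hk a Ha.
    by apply/(H0 k Hk).
  have [M1 H1] := HN (fun k => L (I k) K.+1) (fun k => L_ideal K.+1 (HI k))
      (fun k a H => L_mono_J (Hmono k) H).
  exists (maxn M M1) => n Hn k Hk a Ha.
  rewrite geq_max in Hk; case/andP: Hk => Hk1 Hk2.
  rewrite leq_eqVlt in Hn; case/orP: Hn => [/eqP En|Hn].
    subst n; apply: (L_mono_J (chain M1 (maxn M M1) (leq_maxr _ _))).
    by apply/(H1 k Hk2).
  apply: (L_mono_J (chain M (maxn M M1) (leq_maxl _ _))).
  exact: (HM n Hn k Hk1 a Ha).
have [M HM'] := HM N0.
exists (maxn N0 M) => n Hn x; split; last exact: (chain _ _ Hn x).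
rewrite geq_max in Hn; case/andP: Hn => Hn1 Hn2.
move=> Hx; refine (eq_from_L (HI (maxn N0 M)) (HI n) _ _ Hx).
  by apply: chain; rewrite geq_max Hn1.
move=> d a Ha.
case: (leqP d N0) => Hd.
  apply: (L_mono_J (chain M (maxn N0 M) (leq_maxr _ _))).
  exact: (HM' d Hd n Hn2).
have Ht : L (I (maxn d n)) (maxn d n) a.
  apply: (L_mono_J (chain n (maxn d n) (leq_maxr _ _))).
  apply: (L_mono_d' (HI n)) Ha; exact: leq_maxl.
have Ht' : L (I N0) N0 a.
  apply/(HN0 (maxn d n)) => //; apply: leq_trans (ltnW Hd) _; exact: leq_maxl.
apply: (L_mono_d' (HI _) (ltnW Hd)).
exact: (L_mono_J (chain N0 (maxn N0 M) (leq_maxl _ _)) Ht').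
Qed.

End Main.

Theorem theorem13 (R : zmodType) (mul : R -> R -> R) (one : R)
  (sigma delta : R -> R) :
  is_naring 0 one +%R -%R mul ->
  (forall x y, sigma (x + y) = sigma x + sigma y) ->
  (forall y, exists x, sigma x = y) ->
  sigma one = one ->
  (forall x y, delta (x + y) = delta x + delta y) ->
  delta one = 0 ->
  right_noetherian 0 +%R -%R mul ->
  right_noetherian (ozero R) (@oadd R) (@oopp R) (omul mul sigma delta).
Proof.
move=> H1 H2 H3 H4 H5 H6 H7.
exact: (@main_thm R mul one sigma delta).
Qed.
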